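(* Let $f\in\mathbb{Z}_2[x]$, $n\ge1$, and let $\sigma$ be a growing $k$-cycle of $f_n$. Then its (unique) lift either strongly grows or strongly splits.
   Context: $f_n$ is the induced map on $\mathbb{Z}/2^n\mathbb{Z}$, $f_n(x\bmod 2^n)=f(x)\bmod 2^n$. A $k$-cycle of $f_n$ is a tuple $\sigma=(x_1,\dots,x_k)$ of distinct elements with $f_n(x_i)=x_{i+1}$, $f_n(x_k)=x_1$; $\sigma$ grows if $\{y\in\mathbb{Z}/2^{n+1}\mathbb{Z}:y\bmod 2^n\in\sigma\}$ is a single cycle of $f_{n+1}$ (of length $2k$), called its lift. For a cycle of length $\ell$ at level $m$ and a representative $x\in\mathbb{Z}_2$ of one of its points, $a_m=(f^\ell)'(x)$ and $b_m=(f^\ell(x)-x)/2^m$; the cycle strongly grows if $a_m\equiv1\pmod4$ and $b_m$ is odd, and strongly splits if $a_m\equiv1\pmod4$ and $b_m$ is even. *)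

(* Defs.v *)
From HB Require Import structures.
From mathcomp Require Import all_boot all_order all_algebra.
From mathcomp Require Import boolp.
Set Implicit Arguments. Unset Strict Implicit. Unset Printing Implicit Defensive.
Import Order.TTheory GRing.Theory Num.Theory.

(* The ring Z_2 of 2-adic integers, as the inverse limit of the Z/2^n:      *)
(* an element is a coherent sequence of residues x_n in [0, 2^n) with      *)
(* x_{n+1} mod 2^n = x_n (coherence forces x_n < 2^n).                       *)
Record Z2 := MkZ2 { z2seq : nat -> nat ;
                    z2coh : forall n, z2seq n.+1 %% 2 ^ n = z2seq n }.

HB.instance Definition _ := gen_eqMixin Z2.
HB.instance Definition _ := gen_choiceMixin Z2.

Lemma z2_ext (x y : Z2) : (forall n, z2seq x n = z2seq y n) -> x = y.
Proof.
case: x y => [x hx] [y hy] /= e.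
have exy : x = y by apply: funext.
subst y; congr MkZ2; exact: Prop_irrelevance.
Qed.

Lemma z2_mod (x : Z2) n : z2seq x n %% 2 ^ n = z2seq x n.
Proof. by rewrite -z2coh modn_mod. Qed.

Lemma dvd2S n : 2 ^ n %| 2 ^ n.+1.
Proof. by rewrite expnS dvdn_mull. Qed.

Definition z2_of_fun (f : nat -> nat)
  (hf : forall n, f n.+1 %% 2 ^ n = f n %% 2 ^ n) : Z2.
refine (@MkZ2 (fun n => f n %% 2 ^ n) _).
move=> n; by rewrite modn_dvdm ?dvd2S // hf.
Defined.

Lemma z2_of_funE f hf n : z2seq (@z2_of_fun f hf) n = f n %% 2 ^ n.
Proof. by []. Qed.

Lemma z2_zero_coh n : 0 %% 2 ^ n = 0 %% 2 ^ n. Proof. by []. Qed.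
Definition z2zero : Z2 := z2_of_fun z2_zero_coh.

Lemma z2_one_coh n : 1 %% 2 ^ n.+1 %% 2 ^ n = 1 %% 2 ^ n.
Proof. by rewrite modn_dvdm ?dvd2S. Qed.

Lemma z2_add_coh (x y : Z2) n :
  (z2seq x n.+1 + z2seq y n.+1) %% 2 ^ n = (z2seq x n + z2seq y n) %% 2 ^ n.
Proof. by rewrite -modnDm !z2coh. Qed.
Definition z2add (x y : Z2) : Z2 := z2_of_fun (z2_add_coh x y).

Lemma z2_mul_coh (x y : Z2) n :
  (z2seq x n.+1 * z2seq y n.+1) %% 2 ^ n = (z2seq x n * z2seq y n) %% 2 ^ n.
Proof. by rewrite -modnMm !z2coh. Qed.
Definition z2mul (x y : Z2) : Z2 := z2_of_fun (z2_mul_coh x y).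

Lemma z2_opp_coh (x : Z2) n :
  (2 ^ n.+1 - z2seq x n.+1) %% 2 ^ n = (2 ^ n - z2seq x n) %% 2 ^ n.
Proof.
have lt1 : z2seq x n.+1 <= 2 ^ n.+1.
  by rewrite -z2_mod ltnW // ltn_mod expn_gt0.
have lt0 : z2seq x n <= 2 ^ n.
  by rewrite -z2_mod ltnW // ltn_mod expn_gt0.
apply/eqP; rewrite -(eqn_modDr (z2seq x n.+1)) subnK //.
rewrite expnS modnMl -modnDmr z2coh subnK // modnn //.
Qed.
Definition z2opp (x : Z2) : Z2 := z2_of_fun (z2_opp_coh x).

Lemma z2_addA : associative z2add.
Proof. by move=> x y z; apply: z2_ext => n /=; rewrite modnDml modnDmr addnA. Qed.
Lemma z2_addC : commutative z2add.
Proof. by move=> x y; apply: z2_ext => n /=; rewrite addnC. Qed.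
Lemma z2_add0 : left_id z2zero z2add.
Proof. by move=> x; apply: z2_ext => n /=; rewrite mod0n add0n z2_mod. Qed.
Lemma z2_addN : left_inverse z2zero z2opp z2add.
Proof.
move=> x; apply: z2_ext => n /=; rewrite modnDml subnK ?modnn ?mod0n //.
by rewrite -z2_mod ltnW // ltn_mod expn_gt0.
Qed.

HB.instance Definition _ := GRing.isZmodule.Build Z2 z2_addA z2_addC z2_add0 z2_addN.

Definition z2one : Z2 := MkZ2 z2_one_coh.

Lemma z2_mulA : associative z2mul.
Proof. by move=> x y z; apply: z2_ext => n /=; rewrite modnMml modnMmr mulnA. Qed.
Lemma z2_mulC : commutative z2mul.
Proof. by move=> x y; apply: z2_ext => n /=; rewrite mulnC. Qed.
Lemma z2_mul1 : left_id z2one z2mul.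
Proof. by move=> x; apply: z2_ext => n /=; rewrite modnMml mul1n z2_mod. Qed.
Lemma z2_mulDl : left_distributive z2mul (@GRing.add Z2).
Proof.
move=> x y z; apply: z2_ext => n /=.
by rewrite modnMml modnDml modnDmr mulnDl.
Qed.
Lemma z2_one_neq0 : z2one != 0%R.
Proof.
apply/eqP => /(congr1 (fun x => z2seq x 1)) /=.
by rewrite /z2zero /=.
Qed.

HB.instance Definition _ := GRing.Zmodule_isComNzRing.Build Z2
  z2_mulA z2_mulC z2_mul1 z2_mulDl z2_one_neq0.

Local Open Scope ring_scope.
Unset Implicit Arguments.

(* x mod 2^n, for x in Z_2 (used for n >= 1, where 'Z_(2^n) is Z/2^nZ). *)
Definition z2red (n : nat) (x : Z2) : 'Z_(2 ^ n) := inZp (z2seq x n).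

Definition zres (n : nat) (y : 'Z_(2 ^ n.+1)) : 'Z_(2 ^ n) := inZp (nat_of_ord y).

(* f_n (x mod 2^n) = f(x) mod 2^n, computed on the representative
   y%:R in Z_2 of the class y (f(x) mod 2^n only depends on x mod 2^n). *)
Definition fn (f : {poly Z2}) (n : nat) (y : 'Z_(2 ^ n)) : 'Z_(2 ^ n) :=
  z2red n f.[(nat_of_ord y)%:R].
Arguments fn f n y : clear implicits.
Arguments zres n y : clear implicits.

Definition is_cycle (T : eqType) (g : T -> T) (s : seq T) : Prop :=
  [&& s != [::], uniq s & fcycle g s].
Arguments is_cycle {T} g s.

Definition is_lift (f : {poly Z2}) (n : nat) (s : seq 'Z_(2 ^ n))
    (s' : seq 'Z_(2 ^ n.+1)) : Prop :=
  is_cycle (fn f n.+1) s' /\ forall y, (y \in s') = (zres n y \in s).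

Definition grows (f : {poly Z2}) (n : nat) (s : seq 'Z_(2 ^ n)) : Prop :=
  exists s', is_lift f n s s' /\ size s' = (2 * size s)%N.

Definition poly_iter (f : {poly Z2}) (l : nat) : {poly Z2} :=
  iter l (fun g => f \Po g) 'X.

Definition a_coef (f : {poly Z2}) (l : nat) (x : Z2) : Z2 :=
  (poly_iter f l)^`().[x].

Definition z2even (b : Z2) : Prop := exists c : Z2, b = 2 * c.

(* For a cycle of length l at level m and a representative x of one of its
   points: a_m = 1 mod 4 and b_m = (f^l(x) - x)/2^m is odd (resp. even). *)
Definition strongly_grows_at (f : {poly Z2}) (m l : nat) (x : Z2) : Prop :=
  (exists c, a_coef f l x = 1 + 4 * c) /\
  exists b : Z2, (poly_iter f l).[x] - x = 2 ^+ m * b /\ ~ z2even b.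

Definition strongly_splits_at (f : {poly Z2}) (m l : nat) (x : Z2) : Prop :=
  (exists c, a_coef f l x = 1 + 4 * c) /\
  exists b : Z2, (poly_iter f l).[x] - x = 2 ^+ m * b /\ z2even b.

(* Main.v *)
Require Import Defs.
From HB Require Import structures.
From mathcomp Require Import all_boot all_order all_algebra.
From mathcomp Require Import ring.
Import GRing.Theory.
Local Open Scope ring_scope.

Lemma z2_modle (x : Z2) i j : (i <= j)%N -> (z2seq x j %% 2^i)%N = z2seq x i.
Proof.
move=> /subnK <-; elim: (j - i)%N => [|d IH]; first by rewrite add0n z2_mod.
by rewrite addSn -IH -(z2coh x (d+i)) modn_dvdm // dvdn_exp2l // leq_addl.
Qed.

Lemma z2seqD (x y : Z2) m : z2seq (x + y) m = ((z2seq x m + z2seq y m) %% 2^m)%N. Proof. by []. Qed.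
Lemma z2seqM (x y : Z2) m : z2seq (x * y) m = ((z2seq x m * z2seq y m) %% 2^m)%N. Proof. by []. Qed.
Lemma z2seq1 m : z2seq 1 m = (1 %% 2^m)%N. Proof. by []. Qed.

Lemma z2seq_nat N m : z2seq (N%:R : Z2) m = (N %% 2^m)%N.
Proof.
elim: N => [|N IH]; first by rewrite /= mod0n.
rewrite mulrS.
by rewrite z2seqD IH z2seq1 modnDm add1n.
Qed.

Lemma two_pow m : (2 ^+ m : Z2) = (2 ^ m)%N%:R.
Proof. by rewrite natrX. Qed.

Lemma z2div (x : Z2) m : z2seq x m = 0%N -> exists b : Z2, x = 2^+m * b.
Proof.
move=> x0.
have dv j : (2^m %| z2seq x (j + m))%N.
  by rewrite /dvdn z2_modle ?leq_addl // x0.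
have hf j : ((z2seq x (j.+1 + m) %/ 2^m) %% 2^j = (z2seq x (j + m) %/ 2^m) %% 2^j)%N.
  rewrite (divn_eq (z2seq x (j.+1 + m)) (2^(j+m))) addSn z2coh expnD mulnA.
  by rewrite divnMDl ?expn_gt0 // modnMDl.
exists (z2_of_fun (f := fun j => (z2seq x (j + m) %/ 2^m)%N) hf).
apply: z2_ext => j.
rewrite z2seqM z2_of_funE two_pow z2seq_nat modnMm mulnC divnK //.
by rewrite z2_modle // leq_addr.
Qed.

Arguments z2div {x m}.

Lemma z2seq_mul2 m (b : Z2) : z2seq (2^+m * b) m = 0%N.
Proof.
by rewrite z2seqM two_pow z2seq_nat modnn mul0n mod0n.
Qed.

Lemma ZpE m : (0 < m)%N -> (Zp_trunc (2^m)).+2 = (2^m)%N.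
Proof.
move=> m0; have h : (2 <= 2^m)%N by rewrite -{1}(expn1 2) leq_exp2l.
by rewrite /Zp_trunc; case: (2^m)%N h => [|[|p]].
Qed.

Lemma z2red_val m x : (0 < m)%N -> nat_of_ord (z2red m x) = z2seq x m.
Proof. by move=> m0; rewrite /= ZpE // z2_mod. Qed.

Lemma z2red_eq m x y : (0 < m)%N -> (z2red m x = z2red m y) <-> z2seq x m = z2seq y m.
Proof.
move=> m0; split; first by move/(congr1 (@nat_of_ord _)); rewrite !z2red_val.
by move=> e; apply: val_inj; change (nat_of_ord (z2red m x) = nat_of_ord (z2red m y)); rewrite !z2red_val.
Qed.

Lemma z2redD m x y : (0 < m)%N -> z2red m (x + y) = z2red m x + z2red m y.
Proof.
move=> m0; apply: val_inj.
change (nat_of_ord (z2red m (x + y)) = ((nat_of_ord (z2red m x) + nat_of_ord (z2red m y)) %% (Zp_trunc (2^m)).+2)%N).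
by rewrite !z2red_val // ZpE.
Qed.

Lemma z2redM m x y : (0 < m)%N -> z2red m (x * y) = z2red m x * z2red m y.
Proof.
move=> m0; apply: val_inj.
change (nat_of_ord (z2red m (x * y)) = ((nat_of_ord (z2red m x) * nat_of_ord (z2red m y)) %% (Zp_trunc (2^m)).+2)%N).
by rewrite !z2red_val // ZpE.
Qed.

Lemma z2redB m x y : (0 < m)%N -> z2red m (x - y) = z2red m x - z2red m y.
Proof.
move=> m0; apply/(addIr (z2red m y)); by rewrite -z2redD // !subrK.
Qed.

Lemma z2red0 m : (0 < m)%N -> z2red m 0 = 0.
Proof. by move=> m0; apply: val_inj; change (nat_of_ord (z2red m 0) = 0%N); rewrite z2red_val //= mod0n. Qed.

Lemma z2red_eq0 m x y : (0 < m)%N -> (z2red m x = z2red m y) <-> z2seq (x - y) m = 0%N.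
Proof.
move=> m0; have z0 : z2seq (0:Z2) m = 0%N by rewrite /= mod0n.
split=> [e|h].
  rewrite -z0; apply/(z2red_eq _ _ _ m0); by rewrite z2redB // e subrr z2red0.
have : z2red m (x - y) = z2red m 0 by apply/(z2red_eq _ _ _ m0); rewrite h z0.
by rewrite z2redB // z2red0 // => /eqP; rewrite subr_eq0 => /eqP.
Qed.
Lemma poly_iterS f j : poly_iter f j.+1 = f \Po poly_iter f j. Proof. by []. Qed.

Lemma poly_iter_eval f j x : (poly_iter f j).[x] = iter j (fun y => f.[y]) x.
Proof.
elim: j => [|j IH]; first by rewrite hornerX.
by rewrite poly_iterS horner_comp IH.
Qed.

Lemma poly_iterD f a b : poly_iter f (a + b) = poly_iter f a \Po poly_iter f b.
Proof.
elim: a => [|a IH]; first by rewrite add0n comp_polyX.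
by rewrite addSn !poly_iterS IH comp_polyA.
Qed.

Lemma fcycle_iter (T : eqType) (g : T -> T) s x : fcycle g s -> x \in s -> iter (size s) g x = x.
Proof.
move=> cy xs; case/rot_to: xs cy => i p e.
rewrite -(rot_cycle i) -(size_rot i) e /= => /fpathP [n en].
have sz : n = (size p).+1 by rewrite -(size_traject g (g x) n) -en size_rcons.
by rewrite -iterS -sz -last_traject -en last_rcons.
Qed.

Arguments fcycle_iter {T g s x}.

Lemma taylor1 (p : {poly Z2}) x h : exists w, p.[x+h] = p.[x] + h * p^`().[x] + h^+2 * w.
Proof.
elim/poly_ind: p => [|p c [w IH]]; first by exists 0; rewrite deriv0 !horner0; ring.
exists (p^`().[x] + w * (x+h)).
rewrite derivMXaddC !hornerMXaddC hornerD hornerM hornerX IH; ring.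
Qed.

Lemma taylor2 (p : {poly Z2}) x h : exists u v, p^`().[x+h] = p^`().[x] + 2*h*u + h^+2*v.
Proof.
elim/poly_ind: p => [|p c [u [v IH]]]; first by exists 0, 0; rewrite deriv0 !horner0; ring.
have [w Hw] := taylor1 p x h.
exists (p^`().[x] + u * (x+h)), (w + v * (x+h)).
rewrite derivMXaddC !hornerD !hornerM !hornerX Hw IH; ring.
Qed.
Lemma evalcong m (p : {poly Z2}) x y : (0<m)%N -> z2red m x = z2red m y -> z2red m p.[x] = z2red m p.[y].
Proof.
move=> m0 e; elim/poly_ind: p => [|p c IH]; first by rewrite !horner0.
by rewrite !hornerMXaddC !z2redD // !z2redM // IH e.
Qed.

Lemma fn_red f m y : (0<m)%N -> fn f m (z2red m y) = z2red m f.[y].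
Proof.
move=> m0; rewrite /fn; apply: evalcong => //; apply/(z2red_eq _ _ _ m0).
by rewrite z2seq_nat z2red_val // z2_mod.
Qed.

Lemma iter_red f m j y : (0<m)%N -> iter j (fn f m) (z2red m y) = z2red m (poly_iter f j).[y].
Proof.
move=> m0; elim: j => [|j IH]; first by rewrite hornerX.
by rewrite iterS IH fn_red // poly_iterS horner_comp.
Qed.

Lemma zres_red n z : (0 < n)%N -> zres n (z2red n.+1 z) = z2red n z.
Proof.
move=> n0; apply: val_inj.
change (((nat_of_ord (z2red n.+1 z)) %% (Zp_trunc (2^n)).+2)%N = nat_of_ord (z2red n z)).
by rewrite !z2red_val // ZpE // z2_modle.
Qed.

Theorem lemma3p8 (f : {poly Z2}) (n k : nat) (s : seq 'Z_(2 ^ n)) :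
  (1 <= n)%N ->
  is_cycle (fn f n) s -> size s = k ->
  grows f n s ->
  forall s' : seq 'Z_(2 ^ n.+1), is_lift f n s s' ->
  forall x : Z2, z2red n.+1 x \in s' ->
    strongly_grows_at f n.+1 (size s') x \/ strongly_splits_at f n.+1 (size s') x.
Proof.
move=> n1 /and3P [_ us cs] hk [s'' [[/and3P [_ us'' _] m''] sz'']] s' [/and3P [_ us' cs'] m'] x hx.
have n0 : (0 < n)%N by [].
have m0 : (0 < n.+1)%N by [].
have szl : size s' = (k + k)%N.
  have -> : (k + k)%N = size s'' by rewrite sz'' hk mul2n addnn.
  apply: perm_size; apply: uniq_perm => // y.
  by rewrite m' m''.
have xn : z2red n x \in s by rewrite -zres_red // -m'.
set g := poly_iter f k.
have [t ht] : exists t, g.[x] = x + 2^+n * t.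
  have e := fcycle_iter cs xn; rewrite hk iter_red // in e.
  have [t ht] := z2div ((proj1 (z2red_eq0 _ _ _ n0)) e).
  by exists t; rewrite -ht; ring.
have [b hb] : exists b, (poly_iter f (size s')).[x] - x = 2^+n.+1 * b.
  have e := fcycle_iter cs' hx; rewrite iter_red // in e.
  exact: z2div ((proj1 (z2red_eq0 _ _ _ m0)) e).
have [P hP] : exists P : Z2, 2^+n = 2 * P by exists (2^+n.-1); rewrite -exprS prednK.
have [e he] : exists e, g^`().[x] = 1 + 2 * e.
  have lt2 : (z2seq (g^`().[x]) 1 < 2)%N by rewrite -(z2_mod _ 1) ltn_mod.
  case E: (z2seq (g^`().[x]) 1) lt2 => [|[|//]] _.
    exfalso.
    have [e0 he0] := z2div E.
    set X := z2red n.+1 x; set Y := z2red n.+1 (x + 2^+n).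
    have Yin : Y \in s'.
      rewrite m' zres_red //; suff -> : z2red n (x + 2 ^+ n) = z2red n x by [].
      apply/(z2red_eq0 _ _ _ n0).
      have -> : x + 2 ^+ n - x = 2^+n * 1 by ring.
      exact: z2seq_mul2.
    have eqk : iter k (fn f n.+1) Y = iter k (fn f n.+1) X.
      rewrite !iter_red //; apply/(z2red_eq0 _ _ _ m0).
      have [w hw] := taylor1 g x (2^+n).
      rewrite -/g hw he0.
      have -> : g.[x] + 2 ^+ n * (2 ^+ 1 * e0) + (2 ^+ n) ^+ 2 * w - g.[x]
               = 2^+n.+1 * (e0 + P * w).
        rewrite (exprS 2 n) hP expr1; ring.
      exact: z2seq_mul2.
    have XY : X = Y.
      have eX : iter (size s') (fn f n.+1) X = X := fcycle_iter cs' hx.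
      by rewrite -[LHS]eX -[RHS](fcycle_iter cs' Yin) szl !iterD eqk.
    have := proj1 (z2red_eq0 _ _ _ m0) (esym XY).
    have -> : x + 2 ^+ n - x = (2 ^ n)%N%:R by rewrite natrX; ring.
    rewrite z2seq_nat modn_small ?ltn_exp2l //.
    by move/eqP; rewrite expn_eq0.
  have : z2red 1 (g^`().[x]) = z2red 1 1 by apply/(z2red_eq _ _ _ (isT : (0 < 1)%N)); rewrite E.
  move/(z2red_eq0 _ _ _ (isT : (0 < 1)%N))/z2div => [e he]; exists e.
  by rewrite -(subrK 1 (g^`().[x])) he expr1 addrC.
have ha : exists c, a_coef f (size s') x = 1 + 4 * c.
  rewrite /a_coef szl poly_iterD deriv_comp hornerM horner_comp -/g ht.
  have [u [v huv]] := taylor2 g x (2^+n * t).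
  rewrite huv he.
  exists (e + e^+2 + (P * t * u + P * P * t^+2 * v) * (1 + 2 * e)).
  rewrite hP; ring.
have [hev|hodd] := boolp.pselect (z2even b).
  by right; split => //; exists b.
by left; split => //; exists b.
Qed.
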